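(* Let $X=\{k^2:k\in\mathbb N\}\subset\mathbb R$ with the metric $d_X(x,y)=|x-y|$, write $x^k=k^2$, and let $X_n=\{x^k_n:k\in\mathbb N\}$, $n\in\overline{\mathbb N}$, be copies of $X$ realized in the Banach space $\ell_1(\overline{\mathbb N})$ (with standard unit vectors $e_0,e_1,\dots$) by $x^k_0=k^2e_0$, and for $n\ge1$: $x^k_n=k^2e_0+e_n$ if $k\ge n$, $x^k_n=(k^2+n)e_n$ if $k<n$. Let $d$ be the metric on $X_0\sqcup\bigsqcup_{n\ge1}X_n$ induced by the $\ell_1$-norm (so $d$ restricts to $d_X$ on $X_0=X$, $d(x^k_0,x^k_n)=1$ for $k\ge n$, and $d(x_0^k,x_n^k)\to\infty$ as $n\to\infty$). Then, with $Y=\bigsqcup_{n\ge1}X_n\cong X\times\mathbb N$ and the identification $T\leftrightarrow(T_n)_{n\in\mathbb N}$, $$M_{Y,d}=\ell_2(\mathbb K(H_X))+\ell_2(\mathbb D(H_X))'_0,$$ i.e. $M_{Y,d}$ is exactly the set of sums $K+D$ with $K\in\ell_2(\mathbb K(H_X))$ and $D\in\ell_2(\mathbb D(H_X))'_0$.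
   Context: $\overline{\mathbb N}=\mathbb N\cup\{0\}$. $H_Z=\ell^2(Z)$ with standard basis. For a metric $d$ on $X\sqcup Y$ extending $d_X$, $M_{Y,d}$ is the norm closure in $\mathbb B(H_X,H_Y)$ of bounded operators $T:H_X\to H_Y$ of finite propagation (there is $L$ with $(\delta_y,T\delta_x)=0$ whenever $d(x,y)\ge L$). $H_Y=\bigoplus_{n\ge1}H_{X_n}$; $T_n=Q_nT$ with $Q_n$ the projection onto $H_{X_n}$, regarded as an operator on $H_X$ via $\delta_{x^k_n}\leftrightarrow\delta_{x^k}$. $\mathbb K(H_X)$ denotes compact operators and $\mathbb D(H_X)$ the diagonal operators (with respect to $\{\delta_{x^k}\}$). For a $C^*$-algebra $A\subset\mathbb B(H_X)$, $\ell_2(A)$ is the set of sequences $(a_n)$ in $A$ with $\sum a_n^*a_n$ norm convergent, and $\ell_2(A)'$ the set of sequences $(a_n)$ in $A$ with uniformly bounded partial sums $\|\sum_{n=1}^m a_n^*a_n\|$; both are identified with sets of bounded operators $H_X\to H_Y$. $\ell_2(\mathbb D(H_X))'_0$ is the set of $(D_n)\in\ell_2(\mathbb D(H_X))'$ with $D_n=\mathrm{diag}(d^1_n,d^2_n,\dots)$ and $d^i_n=0$ for all $i<n$. *)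

(* Defs.v *)
From HB Require Import structures.
From mathcomp Require Import all_boot all_order all_algebra.
From mathcomp Require Import all_classical all_reals all_analysis.
From mathcomp Require Import complex.
Set Implicit Arguments. Unset Strict Implicit. Unset Printing Implicit Defensive.
Import Order.TTheory GRing.Theory Num.Theory.
Local Open Scope ring_scope.

(* Conventions (0-based encodings):
   - basis index j : nat of H_X = l^2(X) stands for the point x^(j+1) = (j+1)^2 of X;
   - block index n : nat of H_Y = (+)_{n>=1} H_{X_n} stands for the copy X_(n+1);
   - an operator T : H_X -> H_Y is encoded by its matrix
       T n i j = (delta_{x^(i+1)_(n+1)}, T delta_{x^(j+1)}),
     and T_n = Q_n T (an operator on H_X) is the block  fun i j => T n i j;
   - an operator A on H_X is encoded by its matrix A i j = (delta_{x^(i+1)}, A delta_{x^(j+1)}).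
   A matrix is a bounded operator iff it is bounded on finitely supported
   vectors; a finitely supported vector is given by (N, v), meaning
   sum_(j<N) v j delta_{x^(j+1)}. *)

Section Defs.
Variable R : realType.
Local Notation C := R[i].

Definition nsq (z : C) : R := let: Complex a b := z in a ^+ 2 + b ^+ 2.

Definition vnorm2 (N : nat) (v : nat -> C) : R := \sum_(j < N) nsq (v j).

Definition opX := nat -> nat -> C.
Definition appX (A : opX) (N : nat) (v : nat -> C) (i : nat) : C :=
  \sum_(j < N) A i j * v j.

Definition normX_le (A : opX) (c : R) : Prop :=
  0 <= c /\ forall N v,
    (\sum_(i <oo) (nsq (appX A N v i))%:E <= (c ^+ 2 * vnorm2 N v)%:E)%E.
Definition boundedX (A : opX) : Prop := exists c, normX_le A c.

(* K(H_X): bounded operators mapping the unit ball to a totally bounded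
   (= relatively compact, H_X being complete) set; it suffices to test on
   the dense set of finitely supported vectors of the unit ball. *)
Definition compactX (A : opX) : Prop :=
  boundedX A /\ forall eps : R, 0 < eps ->
    exists (r : nat) (w : nat -> nat -> C), forall N v, vnorm2 N v <= 1 ->
      exists k, (k < r)%N /\
        (\sum_(i <oo) (nsq (appX A N v i - w k i))%:E <= (eps ^+ 2)%:E)%E.

Definition diagX (A : opX) : Prop :=
  boundedX A /\ forall i j, i <> j -> A i j = 0.

Definition opY := nat -> nat -> nat -> C.
Definition block (T : opY) (n : nat) : opX := fun i j => T n i j.
Definition appY (T : opY) (N : nat) (v : nat -> C) (n i : nat) : C :=
  \sum_(j < N) T n i j * v j.

Definition normY_le (T : opY) (c : R) : Prop :=
  0 <= c /\ forall N v,
    (\sum_(n <oo) \sum_(i <oo) (nsq (appY T N v n i))%:E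
       <= (c ^+ 2 * vnorm2 N v)%:E)%E.
Definition boundedY (T : opY) : Prop := exists c, normY_le T c.

Definition subY (T S : opY) : opY := fun n i j => T n i j - S n i j.
Definition addY (T S : opY) : opY := fun n i j => T n i j + S n i j.

(* points of l_1(N-bar), as functions nat -> R; x^k_n for n in N-bar, k >= 1 *)
Definition xpt (n k : nat) : nat -> R := fun m =>
  if n == 0%N then (if m == 0%N then (k ^ 2)%:R else 0)
  else if (n <= k)%N then
    (if m == 0%N then (k ^ 2)%:R else if m == n then 1 else 0)
  else (if m == n then (k ^ 2 + n)%:R else 0).

(* l_1 distance between x^k_n and x^j_0 (both supported in {0,..,n}) *)
Definition dist_l1 (n k j : nat) : R :=
  \sum_(m < n.+1) `|xpt n k m - xpt 0 j m|.

Definition finite_prop (T : opY) : Prop :=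
  exists L : R, forall n i j,
    L <= dist_l1 n.+1 i.+1 j.+1 -> T n i j = 0.

Definition MYd (T : opY) : Prop :=
  boundedY T /\ forall eps : R, 0 < eps ->
    exists S, boundedY S /\ finite_prop S /\ normY_le (subY T S) eps.

(* sum_{m <= n < m'} ||T_n v||^2 = < (sum_{m<=n<m'} T_n^* T_n) v, v > *)
Definition blocksum (T : opY) (m m' N : nat) (v : nat -> C) : \bar R :=
  (\sum_(m <= n < m') \sum_(i <oo) (nsq (appY T N v n i))%:E)%E.

(* l_2(A): T_n in A for all n, and sum_n T_n^* T_n is norm convergent, i.e.
   (B(H_X) being complete) norm-Cauchy; for the positive operator
   P = sum_{m<=n<m'} T_n^* T_n, ||P|| <= eps iff <P v, v> <= eps ||v||^2. *)
Definition ell2 (P : opX -> Prop) (T : opY) : Prop :=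
  (forall n, P (block T n)) /\
  forall eps : R, 0 < eps -> exists m0 : nat, forall m m' N v,
    (m0 <= m)%N -> (blocksum T m m' N v <= (eps * vnorm2 N v)%:E)%E.

Definition ell2' (P : opX -> Prop) (T : opY) : Prop :=
  (forall n, P (block T n)) /\
  exists c : R, forall m N v, (blocksum T 0 m N v <= (c * vnorm2 N v)%:E)%E.

(* l_2(D(H_X))'_0: additionally d^i_n = 0 for i < n (1-based), i.e. in the
   0-based encoding T n i i = 0 whenever i < n *)
Definition ell2'0D (T : opY) : Prop :=
  ell2' diagX T /\ forall n i, (i < n)%N -> T n i i = 0.

End Defs.

(* Main.v *)
Require Import Defs.
From HB Require Import structures.
From mathcomp Require Import all_boot all_order all_algebra.
From mathcomp Require Import all_classical all_reals all_analysis.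
From mathcomp Require Import complex.
From mathcomp Require Import zify ring lra.
Set Implicit Arguments. Unset Strict Implicit. Unset Printing Implicit Defensive.
Import Order.TTheory GRing.Theory Num.Theory.
Local Open Scope ring_scope.
Section Basics.
Variable R : realType.
Local Notation C := R[i].
Implicit Types z w : C.

Definition re (z : C) : R := let: Complex a _ := z in a.
Definition im (z : C) : R := let: Complex _ b := z in b.

Lemma nsqE z : nsq z = re z ^+ 2 + im z ^+ 2. Proof. by case: z. Qed.
Lemma nsq_ge0 z : 0 <= nsq z.
Proof. rewrite nsqE; apply: addr_ge0; exact: sqr_ge0. Qed.
Lemma nsq0 : nsq (0 : C) = 0. Proof. by rewrite /= expr0n /= addr0. Qed.
Lemma reD z w : re (z + w) = re z + re w. Proof. by case: z; case: w. Qed.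
Lemma imD z w : im (z + w) = im z + im w. Proof. by case: z; case: w. Qed.
Lemma reB z w : re (z - w) = re z - re w. Proof. by case: z; case: w. Qed.
Lemma imB z w : im (z - w) = im z - im w. Proof. by case: z; case: w. Qed.
Lemma reM z w : re (z * w) = re z * re w - im z * im w. Proof. by case: z; case: w. Qed.
Lemma imM z w : im (z * w) = re z * im w + im z * re w. Proof. by case: z; case: w. Qed.
Lemma re0 : re (0 : C) = 0. Proof. by []. Qed.
Lemma im0 : im (0 : C) = 0. Proof. by []. Qed.
Lemma re_sum I (r : seq I) (P : pred I) (F : I -> C) :
  re (\sum_(i <- r | P i) F i) = \sum_(i <- r | P i) re (F i).
Proof. exact: (big_morph re reD re0). Qed.
Lemma im_sum I (r : seq I) (P : pred I) (F : I -> C) :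
  im (\sum_(i <- r | P i) F i) = \sum_(i <- r | P i) im (F i).
Proof. exact: (big_morph im imD im0). Qed.
Lemma C_ext z w : re z = re w -> im z = im w -> z = w.
Proof. by case: z; case: w => /= a b c d -> ->. Qed.

Lemma nsqD z w : nsq (z + w) <= 2 * nsq z + 2 * nsq w.
Proof. rewrite !nsqE reD imD. set a := re z; set b := re w; set c := im z; set d := im w. have := sqr_ge0 (a - b); have := sqr_ge0 (c - d); have := sqr_ge0 (a + b); have := sqr_ge0 (c + d); nra. Qed.
Lemma nsqB z w : nsq (z - w) <= 2 * nsq z + 2 * nsq w.
Proof. rewrite !nsqE reB imB. set a := re z; set b := re w; set c := im z; set d := im w. have := sqr_ge0 (a - b); have := sqr_ge0 (c - d); have := sqr_ge0 (a + b); have := sqr_ge0 (c + d); nra. Qed.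
Lemma nsqM z w : nsq (z * w) = nsq z * nsq w.
Proof. rewrite !nsqE reM imM. ring. Qed.
Lemma nsqN z : nsq (- z) = nsq z.
Proof. by case: z => a b /=; rewrite !sqrrN. Qed.

Lemma series_le (u : nat -> R) x : (forall i, 0 <= u i) ->
  ((\sum_(i <oo) (u i)%:E <= x%:E)%E <-> forall M, \sum_(0 <= i < M) u i <= x).
Proof.
move=> u0; split.
- move=> H M; rewrite -lee_fin; apply: le_trans H.
  rewrite -sumEFin; apply: nneseries_lim_ge => n _ _; by rewrite lee_fin.
- move=> H; apply: lime_le. apply: is_cvg_nneseries => n _ _; by rewrite lee_fin.
  apply: nearW => M. by rewrite sumEFin lee_fin.
Qed.

Lemma bseries_le (f : nat -> nat -> R) m m' x : (forall n i, 0 <= f n i) ->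
  ((\sum_(m <= n < m') \sum_(i <oo) (f n i)%:E <= x%:E)%E <->
   forall M, \sum_(m <= n < m') \sum_(0 <= i < M) f n i <= x).
Proof.
move=> f0; split.
- move=> H M; rewrite -lee_fin; apply: le_trans H.
  rewrite -sumEFin; apply: lee_sum => n _.
  rewrite -sumEFin; apply: nneseries_lim_ge => k _ _; by rewrite lee_fin.
- move=> H. rewrite -nneseries_sum_nat; last by move=> *; rewrite lee_fin.
  apply: lime_le.
    apply: is_cvg_nneseries => *; apply: sume_ge0 => *; by rewrite lee_fin.
  apply: nearW => M. under eq_bigr do rewrite sumEFin.
  by rewrite sumEFin lee_fin exchange_big_nat /=; apply: H.
Qed.

Lemma dseries_le (f : nat -> nat -> R) x : (forall n i, 0 <= f n i) ->
  ((\sum_(n <oo) \sum_(i <oo) (f n i)%:E <= x%:E)%E <->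
   forall M1 M2, \sum_(0 <= n < M1) \sum_(0 <= i < M2) f n i <= x).
Proof.
move=> f0; split.
- move=> H M1; apply/bseries_le => //; apply: le_trans H.
  apply: nneseries_lim_ge => n _ _; apply: nneseries_ge0 => *; by rewrite lee_fin.
- move=> H; apply: lime_le.
  apply: is_cvg_nneseries => n _ _; apply: nneseries_ge0 => *; by rewrite lee_fin.
  apply: nearW => M1; by apply/bseries_le.
Qed.

Definition bndX (A : opX R) (c : R) := forall N (v : nat -> C) M,
  \sum_(0 <= i < M) nsq (appX A N v i) <= c * vnorm2 N v.
Definition bndY (T : opY R) (c : R) := forall N (v : nat -> C) M1 M2,
  \sum_(0 <= n < M1) \sum_(0 <= i < M2) nsq (appY T N v n i) <= c * vnorm2 N v.

Lemma normX_leE (A : opX R) (c : R) : normX_le A c <-> 0 <= c /\ bndX A (c ^+ 2).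
Proof.
split=> [[c0 H]|[c0 H]]; split => // N v.
- by move=> M; move/series_le: (H N v); apply => i; exact: nsq_ge0.
- by apply/series_le => [i|M]; [exact: nsq_ge0|exact: H].
Qed.

Lemma normY_leE (T : opY R) (c : R) : normY_le T c <-> 0 <= c /\ bndY T (c ^+ 2).
Proof.
split=> [[c0 H]|[c0 H]]; split => // N v.
- by move=> M1 M2; move/dseries_le: (H N v); apply => *; exact: nsq_ge0.
- by apply/dseries_le => [*|M1 M2]; [exact: nsq_ge0|exact: H].
Qed.

Lemma blocksumE (T : opY R) m m' N (v : nat -> C) (x : R) :
  (blocksum T m m' N v <= x%:E)%E <->
  forall M, \sum_(m <= n < m') \sum_(0 <= i < M) nsq (appY T N v n i) <= x.
Proof. by apply: bseries_le => *; exact: nsq_ge0. Qed.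


Implicit Types (A : opX R) (T S : opY R).

Lemma vnorm2_ge0 N (v : nat -> C) : 0 <= vnorm2 N v.
Proof. apply: sumr_ge0 => *; exact: nsq_ge0. Qed.

Lemma appY_add T S N v n i : appY (addY T S) N v n i = appY T N v n i + appY S N v n i.
Proof. by rewrite /appY -big_split /=; apply: eq_bigr => j _; rewrite /addY mulrDl. Qed.
Lemma appY_sub T S N v n i : appY (subY T S) N v n i = appY T N v n i - appY S N v n i.
Proof. by rewrite /appY -sumrB /=; apply: eq_bigr => j _; rewrite /subY mulrBl. Qed.

Lemma sum_nat_ge0 m n (F : nat -> R) : (forall i, 0 <= F i) -> 0 <= \sum_(m <= i < n) F i.
Proof. by move=> H; apply: sumr_ge0. Qed.

Lemma bndY_mono T a b : bndY T a -> a <= b -> bndY T b.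
Proof.
move=> H ab N v M1 M2; apply: le_trans (H N v M1 M2) _.
by apply: ler_wpM2r => //; exact: vnorm2_ge0.
Qed.
Lemma bndX_mono A a b : bndX A a -> a <= b -> bndX A b.
Proof.
move=> H ab N v M; apply: le_trans (H N v M) _.
by apply: ler_wpM2r => //; exact: vnorm2_ge0.
Qed.

Lemma bnd2 (f g h : nat -> nat -> R) M1 M2 a b :
  (forall n i, h n i <= 2 * f n i + 2 * g n i) ->
  \sum_(0 <= n < M1) \sum_(0 <= i < M2) f n i <= a ->
  \sum_(0 <= n < M1) \sum_(0 <= i < M2) g n i <= b ->
  \sum_(0 <= n < M1) \sum_(0 <= i < M2) h n i <= 2 * a + 2 * b.
Proof.
move=> H Ha Hb.
apply: le_trans (_ : \sum_(0 <= n < M1) \sum_(0 <= i < M2) (2 * f n i + 2 * g n i) <= _).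
  by apply: ler_sum => n _; apply: ler_sum => i _.
under eq_bigr do rewrite big_split /= -!mulr_sumr.
rewrite big_split /= -!mulr_sumr; apply: lerD; apply: ler_wpM2l => //.
Qed.

Lemma bndY_add T S a b : bndY T a -> bndY S b -> bndY (addY T S) (2 * a + 2 * b).
Proof.
move=> HT HS N v M1 M2; rewrite mulrDl -!mulrA.
apply: bnd2 (HT N v M1 M2) (HS N v M1 M2) => n i; rewrite appY_add; exact: nsqD.
Qed.
Lemma bndY_sub T S a b : bndY T a -> bndY S b -> bndY (subY T S) (2 * a + 2 * b).
Proof.
move=> HT HS N v M1 M2; rewrite mulrDl -!mulrA.
apply: bnd2 (HT N v M1 M2) (HS N v M1 M2) => n i; rewrite appY_sub; exact: nsqB.
Qed.

Lemma sum_single m k (F : nat -> R) : (forall i, 0 <= F i) -> (m <= k)%N ->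
  F k <= \sum_(m <= i < k.+1) F i.
Proof. by move=> F0 mk; rewrite big_nat_recr //= lerDr; apply: sumr_ge0. Qed.

Lemma bndY_block T c n : bndY T c -> bndX (block T n) c.
Proof.
move=> H N v M; apply: le_trans (H N v n.+1 M).
apply: (sum_single (F := fun n => \sum_(0 <= i < M) nsq (appY T N v n i))) => //.
by move=> k; apply: sumr_ge0 => *; exact: nsq_ge0.
Qed.

Lemma boundedYE T : boundedY T <-> exists c, 0 <= c /\ bndY T c.
Proof.
split=> [[c /normY_leE [c0 H]]|[c [c0 H]]]; first by exists (c ^+ 2); split => //; exact: sqr_ge0.
exists (c + 1); apply/normY_leE; split; first lra.
apply: bndY_mono H _; nra.
Qed.
Lemma boundedXE A : boundedX A <-> exists c, 0 <= c /\ bndX A c.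
Proof.
split=> [[c /normX_leE [c0 H]]|[c [c0 H]]]; first by exists (c ^+ 2); split => //; exact: sqr_ge0.
exists (c + 1); apply/normX_leE; split; first lra.
apply: bndX_mono H _; nra.
Qed.

Lemma sum_pick (V : nmodType) (F : nat -> V) N i :
  \sum_(j < N) (if (j : nat) == i then F j else 0) = if (i < N)%N then F i else 0.
Proof.
elim: N => [|N IH]; first by rewrite big_ord0.
rewrite big_ord_recr /= IH ltnS.
case: (ltngtP i N) => [lt|gt|->]; rewrite ?eqxx ?add0r ?addr0 //.
Qed.

Lemma sum_pick' (V : nmodType) (F : nat -> V) N i :
  \sum_(j < N) (if i == (j : nat) then F j else 0) = if (i < N)%N then F i else 0.
Proof. by rewrite -sum_pick; apply: eq_bigr => j _; rewrite eq_sym. Qed.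

Lemma sum_mono_up (F : nat -> R) m n n' : (forall i, 0 <= F i) -> (n <= n')%N ->
  \sum_(m <= i < n) F i <= \sum_(m <= i < n') F i.
Proof.
move=> F0 nn'; case: (leqP m n) => mn.
  by rewrite (big_cat_nat mn nn') /= lerDl; apply: sumr_ge0.
by rewrite big_geq ?(ltnW mn) //; apply: sumr_ge0.
Qed.

Lemma sum_mono_low (F : nat -> R) m m' n : (forall i, 0 <= F i) -> (m <= m')%N ->
  \sum_(m' <= i < n) F i <= \sum_(m <= i < n) F i.
Proof.
move=> F0 mm'; case: (leqP m' n) => mn.
  by rewrite (big_cat_nat mm' mn) /= lerDr; apply: sumr_ge0.
by rewrite (big_geq (ltnW mn)); apply: sumr_ge0.
Qed.

Lemma sum_trunc (F : nat -> R) M N : (forall i, 0 <= F i) ->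
  \sum_(0 <= i < M) (if (i < N)%N then F i else 0) <= \sum_(0 <= i < N) F i.
Proof.
move=> F0; case: (leqP M N) => MN.
  apply: le_trans (sum_mono_up _ F0 MN); rewrite le_eqVlt; apply/orP; left; apply/eqP.
  by apply: eq_big_nat => i /andP[_ iM]; rewrite (leq_trans iM MN).
rewrite (big_cat_nat (leq0n N) (ltnW MN)) /= [X in _ + X]big1_seq ?addr0.
  by rewrite le_eqVlt; apply/orP; left; apply/eqP; apply: eq_big_nat => i /andP[_ ->].
by move=> i /andP[_]; rewrite mem_index_iota => /andP[Ni _]; rewrite ltnNge Ni.
Qed.

Lemma split_le (F : nat -> R) m M : (forall i, 0 <= F i) ->
  \sum_(0 <= i < M) F i <= \sum_(0 <= i < m) F i + \sum_(m <= i < M) F i.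
Proof.
move=> F0; case: (leqP m M) => mM; first by rewrite -big_cat_nat.
by rewrite (big_geq (ltnW mM)) addr0; apply: sum_mono_up => //; exact: ltnW.
Qed.

Definition dg T : opY R := fun n i j => if (i == j) && (n <= i)%N then T n i j else 0.

Lemma diag_col T c i : bndY T c -> forall M1, \sum_(0 <= n < M1) nsq (T n i i) <= c.
Proof.
move=> H M1.
pose d := fun j : nat => if j == i then (1 : C) else 0.
have := H i.+1 d M1 i.+1.
have -> : vnorm2 i.+1 d = 1.
  rewrite /vnorm2 (eq_bigr (fun j : 'I_i.+1 => if (j : nat) == i then (1 : R) else 0)).
    by rewrite (sum_pick (fun _ => (1:R))) ltnSn.
  by move=> j _; rewrite /d; case: eqP => _; rewrite /= ?expr0n /= ?expr1n ?addr0.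
rewrite mulr1 => H2; apply: le_trans H2; apply: ler_sum => n _.
have -> : nsq (T n i i) = nsq (appY T i.+1 d n i).
  rewrite /appY (eq_bigr (fun j : 'I_i.+1 => if (j : nat) == i then T n i j else 0)).
    by rewrite (sum_pick (T n i)) ltnSn.
  by move=> j _; rewrite /d; case: eqP => _; rewrite ?mulr1 ?mulr0.
apply: (sum_single (F := fun i' => nsq (appY T i.+1 d n i'))) => // *; exact: nsq_ge0.
Qed.

Lemma appY_dg T N v n i :
  appY (dg T) N v n i = if (i < N)%N && (n <= i)%N then T n i i * v i else 0.
Proof.
rewrite /appY /dg (eq_bigr (fun j : 'I_N => if i == j then (if (n <= i)%N then T n i j * v j else 0) else 0)).
  by rewrite (sum_pick' (fun j => if (n <= i)%N then T n i j * v j else 0)); case: (i < N)%N; case: (n <= i)%N.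
by move=> j _; case: eqP => [->|_]; case: (n <= j)%N => //=; rewrite ?andbF mul0r.
Qed.

Lemma bndY_dg T c : 0 <= c -> bndY T c -> bndY (dg T) c.
Proof.
move=> c0 H N v M1 M2.
under eq_bigr do under eq_bigr do rewrite appY_dg.
rewrite exchange_big_nat /=.
apply: le_trans (_ : \sum_(0 <= i < M2) (if (i < N)%N then nsq (v i) * c else 0) <= _).
  apply: ler_sum => i _; case: (i < N)%N => /=; last first.
    by rewrite big1 // => *; rewrite expr2 mul0r addr0.
  apply: le_trans (_ : \sum_(0 <= n < M1) nsq (T n i i) * nsq (v i) <= _).
    apply: ler_sum => n _; case: (n <= i)%N; rewrite ?nsqM // nsq0.
    by apply: mulr_ge0; exact: nsq_ge0.
  rewrite -mulr_suml mulrC; apply: ler_wpM2l; [exact: nsq_ge0|exact: diag_col].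
apply: le_trans (sum_trunc _ _ _) _ => [i|]; first by apply: mulr_ge0 => //; exact: nsq_ge0.
by rewrite -mulr_suml mulrC /vnorm2 big_mkord.
Qed.

Lemma archi (x : R) : exists B : nat, x < B%:R.
Proof. by exists (Num.Def.trunc x).+1; exact: truncnS_gt. Qed.

Lemma dist_formula n k j : dist_l1 R n.+1 k j =
  `|xpt R n.+1 k 0 - (j ^ 2)%:R| + `|xpt R n.+1 k n.+1|.
Proof.
rewrite /dist_l1 big_ord_recr big_ord_recl /= big1 ?addr0 ?subr0 //.
move=> m _; rewrite /xpt /=.
have h1 : (bump 0 m == n.+1) = false by rewrite /bump /= add1n eqSS ltn_eqF.
by rewrite h1; case: (n.+1 <= k)%N; rewrite subr0 normr0.
Qed.

Lemma dist_case1 n k j : (n.+1 <= k)%N ->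
  dist_l1 R n.+1 k j = `|(k ^ 2)%:R - (j ^ 2)%:R| + 1.
Proof. by move=> h; rewrite dist_formula /xpt /= h eqxx normr1. Qed.

Lemma dist_case2 n k j : (k < n.+1)%N ->
  dist_l1 R n.+1 k j = (j ^ 2)%:R + (k ^ 2 + n.+1)%:R.
Proof.
move=> h; rewrite dist_formula /xpt /= leqNgt h /= eqxx sub0r normrN !normr_nat.
by [].
Qed.

Lemma fp_support (S : opY R) : finite_prop S -> exists B : nat, forall n i j,
  S n i j != 0 -> ((i == j) && (n <= i)%N) || [&& (n < B)%N, (i < B)%N & (j < B)%N].
Proof.
move=> [L HL]; have [B LB] := archi L; exists B => n i j nz.
have dL : dist_l1 R n.+1 i.+1 j.+1 < B%:R.
  apply: (lt_trans _ LB); rewrite ltNge; apply/negP => /HL h; by rewrite h eqxx in nz.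
case: (leqP n i) => ni.
- case: (eqVneq i j) => [->//|ij].
  rewrite dist_case1 // in dL; apply/orP; right.
  have hB : (i.+1%:R : R) < B%:R /\ (j.+1%:R : R) < B%:R.
    rewrite !natrX in dL; set a := (i.+1)%:R : R in dL *; set b := (j.+1)%:R : R in dL *.
    have a1 : 1 <= a by rewrite /a ler1n.
    have b1 : 1 <= b by rewrite /b ler1n.
    have hab : b + 1 <= a \/ a + 1 <= b.
      case: (ltngtP i j) => h; [right|left|by rewrite h eqxx in ij];
        rewrite /a /b natr1 ler_nat; lia.
    have hn : `|a ^+ 2 - b ^+ 2| >= a + b.
      case: hab => h.
        apply: le_trans (ler_norm _); nra.
      rewrite distrC; apply: le_trans (ler_norm _); nra.
    split; lra.
  case: hB; rewrite !ltr_nat => h1 h2.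
  by apply/and3P; split; lia.
- rewrite dist_case2 // in dL; apply/orP; right.
  rewrite -natrD ltr_nat in dL.
  have h1 : (j < B)%N by apply: leq_ltn_trans dL; nia.
  have h2 : (n < B)%N by apply: leq_ltn_trans dL; nia.
  by apply/and3P; split; lia.
Qed.

Lemma dist_diag n i : (n <= i)%N -> dist_l1 R n.+1 i.+1 i.+1 = 1.
Proof. by move=> h; rewrite dist_case1 // subrr normr0 add0r. Qed.

Lemma dist_ub n i j : dist_l1 R n.+1 i.+1 j.+1 <= ((i.+1) ^ 2 + (j.+1) ^ 2 + n.+1)%:R.
Proof.
case: (leqP n i) => ni.
- rewrite dist_case1 //; apply: le_trans (_ : (((i.+1) ^ 2)%:R + ((j.+1) ^ 2)%:R + 1 : R) <= _).
    rewrite lerD2r; apply: le_trans (ler_normB _ _) _; by rewrite !normr_nat.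
  by rewrite -!natrD natr1 ler_nat; lia.
- rewrite dist_case2 // -natrD ler_nat; lia.
Qed.

Lemma grid1 (h : R) : 0 < h -> forall n : nat, forall y, 0 <= y -> y <= n%:R * h ->
  exists k, (k <= n)%N /\ `|y - k%:R * h| <= h.
Proof.
move=> h0; elim=> [|n IH] y y0 yn.
  exists 0%N; split => //; rewrite mul0r subr0 ger0_norm //; by rewrite mul0r in yn; lra.
case: (lerP y (n%:R * h)) => hy.
  by have [k [kn hk]] := IH y y0 hy; exists k; split => //; exact: leqW.
exists n.+1; split => //; rewrite ler_norml; rewrite -natr1 in yn *; apply/andP; split; nra.
Qed.

Lemma small_h (eta : R) : 0 < eta -> exists h, 0 < h /\ 2 * h ^+ 2 <= eta.
Proof.
move=> e0; exists (Num.min eta 1 / 2).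
have m0 : 0 < Num.min eta 1 by rewrite lt_min e0 ltr01.
have m1 : Num.min eta 1 <= 1 by rewrite ge_min lexx orbT.
have me : Num.min eta 1 <= eta by rewrite ge_min lexx.
set m := Num.min eta 1 in m0 m1 me *.
split; first by apply: divr_gt0.
have -> : 2 * (m / 2) ^+ 2 = m * m / 2 by rewrite expr2; field.
nra.
Qed.

Lemma sq_le_of_norm (u h : R) : `|u| <= h -> u ^+ 2 <= h ^+ 2.
Proof. by rewrite ler_norml => /andP[h1 h2]; nra. Qed.

Lemma sq_bound (x a : R) : 0 <= a -> x ^+ 2 <= a ^+ 2 -> - a <= x /\ x <= a.
Proof. by move=> a0 h; split; rewrite leNgt; apply/negP => hx; nra. Qed.

Lemma c_le_sq (c : R) : 0 <= c -> c <= (c + 1) ^+ 2.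
Proof. by move=> c0; nra. Qed.

Lemma gridC (c eta : R) : 0 <= c -> 0 < eta -> exists (r : nat) (g : nat -> C),
  forall z, nsq z <= c -> exists k, (k < r)%N /\ nsq (z - g k) <= eta.
Proof.
move=> c0 e0; have [h [h0 hh]] := small_h e0.
set a := c + 1.
have [n hn] := archi (2 * a / h).
have hn' : 2 * a <= n%:R * h by rewrite -ler_pdivrMr //; exact: ltW.
exists (n.+1 * n.+1)%N.
exists (fun k => Complex (- a + (k %/ n.+1)%:R * h) (- a + (k %% n.+1)%:R * h)).
case=> x y /= hz.
have a0 : 0 < a by rewrite /a; lra.
have hx2 : x ^+ 2 <= a ^+ 2 by rewrite /a; have := sqr_ge0 y; have := c_le_sq c0; lra.
have hy2 : y ^+ 2 <= a ^+ 2 by rewrite /a; have := sqr_ge0 x; have := c_le_sq c0; lra.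
have hx : 0 <= x + a /\ x + a <= n%:R * h.
  by have := sq_bound (ltW a0) hx2; lra.
have hy : 0 <= y + a /\ y + a <= n%:R * h.
  by have := sq_bound (ltW a0) hy2; lra.
have [k1 [k1n hk1]] := grid1 h0 hx.1 hx.2.
have [k2 [k2n hk2]] := grid1 h0 hy.1 hy.2.
exists (k1 * n.+1 + k2)%N; split.
  apply: (@leq_trans (k1.+1 * n.+1)); first by rewrite mulSn [(n.+1 + _)%N]addnC ltn_add2l ltnS.
  by rewrite leq_mul2r ltnS k1n orbT.
rewrite divnMDl // modnMDl divn_small ?modn_small ?addn0 //.
have -> : x - (- a + k1%:R * h) = x + a - k1%:R * h by ring.
have -> : y - (- a + k2%:R * h) = y + a - k2%:R * h by ring.
have := sq_le_of_norm hk1; have := sq_le_of_norm hk2; lra.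
Qed.

Lemma netvec (c eta : R) : 0 <= c -> 0 < eta -> forall b : nat,
  exists (r : nat) (w : nat -> nat -> C), forall u : nat -> C,
    (forall i, (b <= i)%N -> u i = 0) -> (forall i, nsq (u i) <= c) ->
    exists k, (k < r)%N /\ forall i, nsq (u i - w k i) <= (if (i < b)%N then eta else 0).
Proof.
move=> c0 e0; have [rG [g Hg]] := gridC c0 e0.
elim=> [|b [r [w IH]]].
  exists 1%N, (fun _ _ => 0) => u u0 _; exists 0%N; split => // i.
  by rewrite u0 // subr0 nsq0.
exists (r * rG)%N, (fun (k i : nat) => if i == b then g (k %% rG)%N else w (k %/ rG)%N i).
move=> u u0 uc.
pose u' := fun i => if i == b then 0 else u i.
have u'0 : forall i, (b <= i)%N -> u' i = 0.
  by move=> i bi; rewrite /u'; case: eqP => // /eqP ib; apply: u0; rewrite ltn_neqAle eq_sym ib bi.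
have u'c : forall i, nsq (u' i) <= c.
  by move=> i; rewrite /u'; case: eqP => _; rewrite ?nsq0 ?uc.
have [k1 [k1r hk1]] := IH u' u'0 u'c.
have [k2 [k2r hk2]] := Hg (u b) (uc b).
exists (k1 * rG + k2)%N; split.
  apply: (@leq_trans (k1.+1 * rG)); first by rewrite mulSn [(rG + _)%N]addnC ltn_add2l.
  by rewrite leq_mul2r k1r orbT.
move=> i; rewrite modnMDl divnMDl ?(leq_ltn_trans _ k2r) // modn_small // divn_small // addn0.
case: (eqVneq i b) => [->|ib]; first by rewrite ltnSn.
have := hk1 i; rewrite /u' /=; case: eqP => [e|_]; first by rewrite e eqxx in ib.
move=> H; apply: le_trans H _.
rewrite [(i < b.+1)%N]ltnS [(i <= b)%N]leq_eqVlt (negbTE ib) /=; case: (i < b)%N => //.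
Qed.

Lemma sum_const_le (F : nat -> R) x M B : 0 <= x -> (forall i, F i <= (if (i < B)%N then x else 0)) ->
  \sum_(0 <= i < M) F i <= B%:R * x.
Proof.
move=> x0 H; apply: le_trans (_ : \sum_(0 <= i < M) (if (i < B)%N then x else 0) <= _).
  by apply: ler_sum => i _.
apply: le_trans (sum_trunc _ _ _) _ => //.
by rewrite sumr_const_nat subn0 mulr_natl.
Qed.

Lemma net_op (A : opX R) B c eta : 0 <= c -> 0 < eta -> bndX A c ->
  (forall i j, (B <= i)%N -> A i j = 0) ->
  exists (r : nat) (w : nat -> nat -> C), forall N (v : nat -> C), vnorm2 N v <= 1 -> exists k, (k < r)%N /\
    forall M, \sum_(0 <= i < M) nsq (appX A N v i - w k i) <= B%:R * eta.
Proof.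
move=> c0 e0 HA A0; have [r [w Hw]] := netvec c0 e0 B.
exists r, w => N v v1.
have h1 : forall i, (B <= i)%N -> appX A N v i = 0.
  by move=> i Bi; rewrite /appX big1 // => j _; rewrite A0 // mul0r.
have h2 : forall i, nsq (appX A N v i) <= c.
  move=> i; apply: le_trans (_ : c * vnorm2 N v <= _); last first.
    by rewrite -[X in _ <= X]mulr1; apply: ler_wpM2l.
  apply: le_trans (HA N v i.+1).
  apply: (sum_single (F := fun i => nsq (appX A N v i))) => // *; exact: nsq_ge0.
have [k [kr hk]] := Hw (appX A N v) h1 h2.
exists k; split => // M; apply: sum_const_le; first exact: ltW.
exact: hk.
Qed.

Lemma cauchy_tail (u : nat -> R) c : (forall i, 0 <= u i) ->
  (forall M, \sum_(0 <= i < M) u i <= c) -> forall eps, 0 < eps ->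
  exists M0, forall M1 M', (M0 <= M1)%N -> \sum_(M1 <= i < M') u i <= eps.
Proof.
move=> u0 Hc eps e0; apply: contrapT => H.
have H' : forall M0, exists M', eps < \sum_(M0 <= i < M') u i.
  move=> M0; apply: contrapT => H2; apply: H; exists M0 => M1 M' h.
  rewrite leNgt; apply/negP => h3; apply: H2; exists M'.
  apply: lt_le_trans h3 _; exact: sum_mono_low.
have Hk : forall k : nat, exists M, k%:R * eps <= \sum_(0 <= i < M) u i.
  elim=> [|k [M hM]]; first by exists 0%N; rewrite mul0r big_geq.
  have [M' hM'] := H' M.
  have MM' : (M <= M')%N.
    rewrite leqNgt; apply/negP => h; rewrite big_geq ?(ltnW h) // in hM'; lra.
  exists M'; rewrite (big_cat_nat (leq0n M) MM') /= -natr1 mulrDl mul1r; lra.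
have [k hk] := archi (c / eps).
have [M hM] := Hk k; have := Hc M.
have : c < k%:R * eps by rewrite -ltr_pdivrMr.
lra.
Qed.

Definition rc (t : R) : C := Complex t 0.
Definition sc (t : R) (v : nat -> C) : nat -> C := fun j => (rc t) * v j.

Lemma nsq_sc t z : nsq (rc t * z) = t ^+ 2 * nsq z.
Proof. by rewrite nsqM /= expr0n /= addr0. Qed.

Lemma appX_sc (A : opX R) N t v i : appX A N (sc t v) i = rc t * appX A N v i.
Proof. by rewrite /appX mulr_sumr; apply: eq_bigr => j _; rewrite /sc mulrCA. Qed.

Lemma vnorm2_sc N t v : vnorm2 N (sc t v) = t ^+ 2 * vnorm2 N v.
Proof. by rewrite /vnorm2 mulr_sumr; apply: eq_bigr => j _; rewrite /sc nsq_sc. Qed.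

Lemma nsq_eq0 z : nsq z = 0 -> z = 0.
Proof.
case: z => a b /= h; have ha := sqr_ge0 a; have hb := sqr_ge0 b.
have a0 : a ^+ 2 = 0 by lra.
have b0 : b ^+ 2 = 0 by lra.
by move: a0 b0 => /eqP; rewrite sqrf_eq0 => /eqP -> /eqP; rewrite sqrf_eq0 => /eqP ->.
Qed.

Lemma scaleX (A : opX R) N m M' eps : 0 <= eps ->
  (forall v, vnorm2 N v <= 1 -> \sum_(m <= i < M') nsq (appX A N v i) <= eps) ->
  forall v, \sum_(m <= i < M') nsq (appX A N v i) <= eps * vnorm2 N v.
Proof.
move=> e0 H v; set s := vnorm2 N v.
have s0 : 0 <= s by exact: vnorm2_ge0.
case: (eqVneq s 0) => [s00|sn0].
  have vz : forall j : 'I_N, v j = 0.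
    move=> j; apply: nsq_eq0; move: s00; rewrite /s /vnorm2 => /psumr_eq0P; apply => // *.
    exact: nsq_ge0.
  rewrite s00 mulr0 big1 // => i _; rewrite /appX big1 ?nsq0 // => j _; by rewrite vz mulr0.
have sp : 0 < s by rewrite lt_def sn0.
set t := (Num.sqrt s)^-1.
have t2 : t ^+ 2 * s = 1 by rewrite /t exprVn sqr_sqrtr // mulVf.
have := H (sc t v); rewrite vnorm2_sc t2 lexx => /(_ isT).
under eq_bigr do rewrite appX_sc nsq_sc.
rewrite -mulr_sumr => h.
have -> : \sum_(m <= i < M') nsq (appX A N v i) = s * (t ^+ 2 * \sum_(m <= i < M') nsq (appX A N v i)).
  by rewrite mulrA (mulrC s) t2 mul1r.
by rewrite mulrC; apply: ler_wpM2r.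
Qed.

Lemma sum2 (F G H : nat -> R) m n : (forall i, H i <= 2 * F i + 2 * G i) ->
  \sum_(m <= i < n) H i <= 2 * \sum_(m <= i < n) F i + 2 * \sum_(m <= i < n) G i.
Proof.
move=> h; rewrite !mulr_sumr -big_split /=; by apply: ler_sum => i _.
Qed.

Lemma fin_max (P : nat -> nat -> Prop) r :
  (forall k, (k < r)%N -> exists M, forall M1, (M <= M1)%N -> P k M1) ->
  exists M, forall k, (k < r)%N -> forall M1, (M <= M1)%N -> P k M1.
Proof.
elim: r => [|r IH] H; first by exists 0%N.
have [M hM] := IH (fun k kr => H k (leqW kr)).
have [M' hM'] := H r (ltnSn r).
exists (maxn M M') => k; rewrite ltnS leq_eqVlt => /orP[/eqP ->|kr] M1 h.
  by apply: hM'; apply: leq_trans h; exact: leq_maxr.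
by apply: hM => //; apply: leq_trans h; exact: leq_maxl.
Qed.

Lemma compact_tail (A : opX R) : compactX A -> forall eps, 0 < eps ->
  exists M, forall M1 N v M', (M <= M1)%N ->
    \sum_(M1 <= i < M') nsq (appX A N v i) <= eps * vnorm2 N v.
Proof.
move=> [/boundedXE [c [c0 Hc]] Hnet] eps e0.
set d := eps / 10.
have d0 : 0 < d by rewrite /d divr_gt0.
have [e [e1 e2]] := small_h d0.
have [r [w Hw]] := Hnet e e1.
have Hw' : forall N v, vnorm2 N v <= 1 -> exists k, (k < r)%N /\
    forall M, \sum_(0 <= i < M) nsq (appX A N v i - w k i) <= d.
  move=> N v v1; have [k [kr hk]] := Hw N v v1; exists k; split => //.
  move/series_le : hk => hk M; apply: le_trans (hk _ M) _; first by move=> *; exact: nsq_ge0.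
  have := sqr_ge0 e; lra.
pose P k M1 := (exists N v, vnorm2 N v <= 1 /\ forall M, \sum_(0 <= i < M) nsq (appX A N v i - w k i) <= d) ->
  forall M', \sum_(M1 <= i < M') nsq (w k i) <= 4 * d.
have [M HM] : exists M, forall k, (k < r)%N -> forall M1, (M <= M1)%N -> P k M1.
  apply: fin_max => k _.
  case: (pselect (exists N v, vnorm2 N v <= 1 /\ forall M, \sum_(0 <= i < M) nsq (appX A N v i - w k i) <= d)); last first.
    by move=> hn; exists 0%N => M1 _ hh; case: (hn hh).
  move=> [N0 [v0 [v01 hv0]]].
  have hb : forall M, \sum_(0 <= i < M) nsq (appX A N0 v0 i) <= c.
    move=> M; apply: le_trans (Hc N0 v0 M) _; rewrite -[X in _ <= X]mulr1; exact: ler_wpM2l.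
  have [M0 hM0] := @cauchy_tail (fun i => nsq (appX A N0 v0 i)) c (fun i => nsq_ge0 _) hb d d0.
  exists M0 => M1 h _ M'.
  apply: le_trans (_ : 2 * \sum_(M1 <= i < M') nsq (appX A N0 v0 i - w k i) + 2 * \sum_(M1 <= i < M') nsq (appX A N0 v0 i) <= _).
    apply: sum2 => i; have := nsqB (appX A N0 v0 i) (appX A N0 v0 i - w k i).
    have -> : appX A N0 v0 i - (appX A N0 v0 i - w k i) = w k i by ring.
    lra.
  have h1 : \sum_(M1 <= i < M') nsq (appX A N0 v0 i - w k i) <= d.
    apply: le_trans (hv0 M'); apply: sum_mono_low => // *; exact: nsq_ge0.
  have h2 := hM0 M1 M' h.
  lra.
exists M => M1 N v M' h.
apply: scaleX; first exact: ltW.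
move=> v' v1; have [k [kr hk]] := Hw' N v' v1.
have hP := HM k kr M1 h (ex_intro _ N (ex_intro _ v' (conj v1 hk))) M'.
apply: le_trans (_ : 2 * \sum_(M1 <= i < M') nsq (appX A N v' i - w k i) + 2 * \sum_(M1 <= i < M') nsq (w k i) <= _).
  apply: sum2 => i; have := nsqD (appX A N v' i - w k i) (w k i).
  have -> : appX A N v' i - w k i + w k i = appX A N v' i by ring.
  lra.
have h1 : \sum_(M1 <= i < M') nsq (appX A N v' i - w k i) <= d.
  apply: le_trans (hk M'); apply: sum_mono_low => // *; exact: nsq_ge0.
rewrite /d in h1 hP *; lra.
Qed.

Lemma cs_real (x x' y y' : nat -> R) N :
  (\sum_(j < N) (x j * y j + x' j * y' j)) ^+ 2 <=
  (\sum_(j < N) (x j ^+ 2 + x' j ^+ 2)) * (\sum_(j < N) (y j ^+ 2 + y' j ^+ 2)).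
Proof.
pose Xf j := x j ^+ 2 + x' j ^+ 2.
pose Yf j := y j ^+ 2 + y' j ^+ 2.
pose Pf j := x j * y j + x' j * y' j.
pose X := \sum_(j < N) Xf j; pose Y := \sum_(j < N) Yf j; pose P := \sum_(j < N) Pf j.
suff : P ^+ 2 <= X * Y by [].
have E : \sum_(j < N) \sum_(k < N) (Xf j * Yf k + Xf k * Yf j - 2 * (Pf j * Pf k)) =
         2 * (X * Y) - 2 * (P * P).
  have Ei : forall j : 'I_N, \sum_(k < N) (Xf j * Yf k + Xf k * Yf j - 2 * (Pf j * Pf k)) =
            Xf j * Y + X * Yf j - 2 * (Pf j * P).
    move=> j; rewrite sumrB big_split /= -mulr_sumr -mulr_suml -mulr_sumr -mulr_sumr.
    reflexivity.
  rewrite (eq_bigr _ (fun j _ => Ei j)) sumrB big_split /= -mulr_suml -mulr_sumr -mulr_sumr -mulr_suml.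
  change (X * Y + X * Y - 2 * (P * P) = 2 * (X * Y) - 2 * (P * P)); ring.
have H : 0 <= \sum_(j < N) \sum_(k < N) (Xf j * Yf k + Xf k * Yf j - 2 * (Pf j * Pf k)).
  apply: sumr_ge0 => j _; apply: sumr_ge0 => k _.
  have -> : Xf j * Yf k + Xf k * Yf j - 2 * (Pf j * Pf k) =
     (x j * y k - x k * y j) ^+ 2 + (x j * y' k - x' k * y j) ^+ 2 +
     (x' j * y k - x k * y' j) ^+ 2 + (x' j * y' k - x' k * y' j) ^+ 2.
    by rewrite /Xf /Yf /Pf; ring.
  by apply: addr_ge0; [apply: addr_ge0; [apply: addr_ge0|]|]; exact: sqr_ge0.
rewrite E in H; rewrite expr2; lra.
Qed.

Lemma cs_complex (a v : nat -> C) N :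
  nsq (\sum_(j < N) a j * v j) <= 2 * ((\sum_(j < N) nsq (a j)) * (\sum_(j < N) nsq (v j))).
Proof.
rewrite nsqE re_sum im_sum.
have E1 : \sum_(j < N) re (a j * v j) = \sum_(j < N) (re (a j) * re (v j) + (- im (a j)) * im (v j)).
  by apply: eq_bigr => j _; rewrite reM; ring.
have E2 : \sum_(j < N) im (a j * v j) = \sum_(j < N) (re (a j) * im (v j) + im (a j) * re (v j)).
  by apply: eq_bigr => j _; rewrite imM.
have A1 : \sum_(j < N) nsq (a j) = \sum_(j < N) (re (a j) ^+ 2 + (- im (a j)) ^+ 2).
  by apply: eq_bigr => j _; rewrite nsqE sqrrN.
have V1 : \sum_(j < N) nsq (v j) = \sum_(j < N) (re (v j) ^+ 2 + im (v j) ^+ 2).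
  by apply: eq_bigr => j _; rewrite nsqE.
have V2 : \sum_(j < N) nsq (v j) = \sum_(j < N) (im (v j) ^+ 2 + re (v j) ^+ 2).
  by apply: eq_bigr => j _; rewrite nsqE addrC.
have A2 : \sum_(j < N) nsq (a j) = \sum_(j < N) (re (a j) ^+ 2 + im (a j) ^+ 2).
  by apply: eq_bigr => j _; rewrite nsqE.
have h1 := cs_real (fun j => re (a j)) (fun j => - im (a j)) (fun j => re (v j)) (fun j => im (v j)) N.
have h2 := cs_real (fun j => re (a j)) (fun j => im (a j)) (fun j => im (v j)) (fun j => re (v j)) N.
rewrite /= -E1 -A1 -V1 in h1; rewrite /= -E2 -A2 -V2 in h2.
lra.
Qed.

Definition cj (z : C) : C := Complex (re z) (- im z).

Lemma row_l2 (A : opX R) c i N : 0 <= c -> bndX A c -> \sum_(j < N) nsq (A i j) <= c.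
Proof.
move=> c0 H; set s := \sum_(j < N) nsq (A i j).
have s0 : 0 <= s by apply: sumr_ge0 => *; exact: nsq_ge0.
pose v j := cj (A i j).
have hv : vnorm2 N v = s.
  by apply: eq_bigr => j _; rewrite /v /cj !nsqE /= sqrrN.
have ha : nsq (appX A N v i) = s ^+ 2.
  rewrite nsqE /appX re_sum im_sum.
  have -> : \sum_(j < N) re (A i j * v j) = s.
    by apply: eq_bigr => j _; rewrite reM /v /cj /= nsqE; ring.
  have -> : \sum_(j < N) im (A i j * v j) = 0.
    by rewrite big1 // => j _; rewrite imM /v /cj /=; ring.
  by rewrite expr0n /= addr0.
have := H N v i.+1; rewrite hv.
have : nsq (appX A N v i) <= \sum_(0 <= i' < i.+1) nsq (appX A N v i').
  apply: (sum_single (F := fun i => nsq (appX A N v i))) => // *; exact: nsq_ge0.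
rewrite ha => h1 h2; have h3 : s ^+ 2 <= c * s by apply: le_trans h1 h2.
clear -h3 s0 c0; nra.
Qed.

Definition colcut (A : opX R) M : opX R := fun i j => if (M <= j)%N then A i j else 0.

Lemma sum_cut (F : nat -> R) M N :
  \sum_(j < N) (if (M <= j)%N then F j else 0) = \sum_(M <= j < N) F j.
Proof.
rewrite -(big_mkord xpredT (fun j => if (M <= j)%N then F j else 0)).
have Z : forall n, (n <= M)%N -> \sum_(0 <= j < n) (if (M <= j)%N then F j else 0) = 0.
  move=> n nM; rewrite (eq_big_nat _ _ (F2 := fun _ => 0)) ?big1 // => j /andP[_ jM].
  by rewrite leqNgt (leq_trans jM nM).
case: (leqP M N) => MN.
  rewrite (big_cat_nat (leq0n M) MN) /= Z // add0r.
  by apply: eq_big_nat => j /andP[-> _].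
by rewrite Z ?(ltnW MN) // big_geq // ltnW.
Qed.

Lemma small_mul (K eps : R) : 0 <= K -> 0 < eps -> exists d, 0 < d /\ K * d <= eps.
Proof.
move=> K0 e0; exists (eps / (K + 1)); split; first by apply: divr_gt0 => //; lra.
rewrite mulrA ler_pdivrMr; last by lra.
nra.
Qed.

Lemma row_tail (A : opX R) c : 0 <= c -> bndX A c -> forall eps, 0 < eps -> forall M,
  exists M', forall M'', (M' <= M'')%N -> forall N v,
    \sum_(0 <= i < M) nsq (appX (colcut A M'') N v i) <= eps * vnorm2 N v.
Proof.
move=> c0 H eps e0 M.
have K0 : 0 <= M%:R * 2 :> R by apply: mulr_ge0; [exact: ler0n|lra].
have [d [d0 hd]] := small_mul K0 e0.
have HM : forall i, (i < M)%N -> exists M0, forall M1, (M0 <= M1)%N ->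
    forall N', \sum_(M1 <= j < N') nsq (A i j) <= d.
  move=> i _.
  have hb : forall N, \sum_(0 <= j < N) nsq (A i j) <= c.
    by move=> N; rewrite big_mkord; exact: row_l2.
  have [M0 h] := cauchy_tail (fun j => nsq_ge0 (A i j)) hb d0.
  by exists M0 => M1 h1 N'; apply: h.
have [M' HM'] := fin_max HM.
exists M' => M'' hM'' N v.
apply: le_trans (_ : \sum_(0 <= i < M) (2 * d * vnorm2 N v) <= _).
  apply: ler_sum_nat => i /andP[_ iM].
  apply: le_trans (cs_complex _ _ _) _.
  rewrite mulrA ler_wpM2r //; first exact: vnorm2_ge0.
  rewrite ler_wpM2l // /colcut.
  have -> : \sum_(j < N) nsq (if (M'' <= j)%N then A i j else 0) =
            \sum_(j < N) (if (M'' <= j)%N then nsq (A i j) else 0).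
    by apply: eq_bigr => j _; case: (M'' <= j)%N; rewrite ?nsq0.
  by rewrite (sum_cut (fun j => nsq (A i j))); apply: HM'.
rewrite sumr_const_nat subn0.
have -> : 2 * d * vnorm2 N v *+ M = (M%:R * 2 * d) * vnorm2 N v by rewrite -mulr_natr; ring.
by apply: ler_wpM2r => //; exact: vnorm2_ge0.
Qed.

Definition cutK (K : opY R) m0 M M' : opY R := fun n i j =>
  if [&& (n < m0)%N, (i < M)%N & (j < M')%N] then K n i j else 0.

Lemma approxK (K : opY R) : ell2 (@compactX R) K -> forall eps, 0 < eps ->
  exists m0 M M', bndY (subY K (cutK K m0 M M')) eps.
Proof.
move=> [Kc Kt] eps e0.
have e2 : 0 < eps / 2 by apply: divr_gt0.
have [m0 hm0] := Kt (eps / 2) e2.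
have tail : forall M1 N v M2, \sum_(m0 <= n < M1) \sum_(0 <= i < M2) nsq (appY K N v n i)
    <= eps / 2 * vnorm2 N v.
  by move=> M1 N v M2; move/blocksumE: (hm0 m0 M1 N v (leqnn _)); apply.
have K0 : 0 <= m0%:R * 2 :> R by apply: mulr_ge0; [exact: ler0n|lra].
have [d [d0 hd]] := small_mul K0 e2.
have HM1 : forall n, (n < m0)%N -> exists M, forall M1, (M <= M1)%N -> forall N v M',
    \sum_(M1 <= i < M') nsq (appX (block K n) N v i) <= d * vnorm2 N v.
  by move=> n _; have [M h] := compact_tail (Kc n) d0; exists M => M1 h1 N v M'; exact: h.
have [M HM] := fin_max HM1.
have HM2 : forall n, (n < m0)%N -> exists M', forall M'', (M' <= M'')%N -> forall N v,
    \sum_(0 <= i < M) nsq (appX (colcut (block K n) M'') N v i) <= d * vnorm2 N v.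
  by move=> n _; have [/boundedXE [c [c0 hc]] _] := Kc n; have := row_tail c0 hc d0 M.
have [M' HM'] := fin_max HM2.
exists m0, M, M' => N v M1 M2.
apply: le_trans (@split_le (fun n => \sum_(0 <= i < M2) nsq (appY (subY K (cutK K m0 M M')) N v n i)) m0 M1 _) _.
  by move=> n; apply: sumr_ge0 => *; exact: nsq_ge0.
have P1 : \sum_(0 <= n < m0) \sum_(0 <= i < M2) nsq (appY (subY K (cutK K m0 M M')) N v n i)
    <= \sum_(0 <= n < m0) (2 * d * vnorm2 N v).
  apply: ler_sum_nat => n /andP[_ nm0].
  apply: le_trans (@split_le (fun i => nsq (appY (subY K (cutK K m0 M M')) N v n i)) M M2 _) _; first by move=> *; exact: nsq_ge0.
  have E1 : \sum_(0 <= i < M) nsq (appY (subY K (cutK K m0 M M')) N v n i) =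
            \sum_(0 <= i < M) nsq (appX (colcut (block K n) M') N v i).
    apply: eq_big_nat => i /andP[_ iM]; congr nsq; rewrite /appY /appX.
    apply: eq_bigr => j _; rewrite /subY /cutK /colcut /block nm0 iM /=.
    by case: (leqP M' j) => h; rewrite ?subr0 ?subrr.
  have E2 : \sum_(M <= i < M2) nsq (appY (subY K (cutK K m0 M M')) N v n i) =
            \sum_(M <= i < M2) nsq (appX (block K n) N v i).
    apply: eq_big_nat => i /andP[Mi _]; congr nsq; rewrite /appY /appX.
    apply: eq_bigr => j _; rewrite /subY /cutK /block nm0 /= ltnNge Mi /=.
    by rewrite subr0.
  rewrite E1 E2.
  move: (HM' n nm0 M' (leqnn _) N v) (HM n nm0 M (leqnn _) N v M2) => h1 h2.
  have -> : 2 * d * vnorm2 N v = d * vnorm2 N v + d * vnorm2 N v by ring.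
  exact: lerD.
have P2 : \sum_(m0 <= n < M1) \sum_(0 <= i < M2) nsq (appY (subY K (cutK K m0 M M')) N v n i)
    = \sum_(m0 <= n < M1) \sum_(0 <= i < M2) nsq (appY K N v n i).
  apply: eq_big_nat => n /andP[mn _]; apply: eq_bigr => i _; congr nsq.
  rewrite /appY; apply: eq_bigr => j _; rewrite /subY /cutK ltnNge mn /=.
  by rewrite subr0.
move: (tail M1 N v M2) => h2.
rewrite sumr_const_nat subn0 in P1.
have h3 : m0%:R * 2 * d * vnorm2 N v <= eps / 2 * vnorm2 N v.
  by apply: ler_wpM2r => //; exact: vnorm2_ge0.
have e3 : 2 * d * vnorm2 N v *+ m0 = m0%:R * 2 * d * vnorm2 N v by rewrite -mulr_natr; ring.
rewrite e3 in P1.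
have -> : eps * vnorm2 N v = eps / 2 * vnorm2 N v + eps / 2 * vnorm2 N v by field.
rewrite P2; apply: lerD; [exact: le_trans P1 h3 | exact: h2].
Qed.

Lemma fin_bound (P : nat -> R -> Prop) m0 :
  (forall n c c', P n c -> c <= c' -> P n c') ->
  (forall n, (n < m0)%N -> exists c, 0 <= c /\ P n c) ->
  exists c, 0 <= c /\ forall n, (n < m0)%N -> P n c.
Proof.
move=> mono; elim: m0 => [|m IH] H; first by exists 0; split.
have [c1 [c10 h1]] := IH (fun n nm => H n (leqW nm)).
have [c2 [c20 h2]] := H m (ltnSn m).
exists (c1 + c2); split; first lra.
move=> n; rewrite ltnS leq_eqVlt => /orP[/eqP ->|nm].
  by apply: mono h2 _; lra.
by apply: mono (h1 n nm) _; lra.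
Qed.

Lemma ell2_bounded (K : opY R) : ell2 (@compactX R) K -> exists c, 0 <= c /\ bndY K c.
Proof.
move=> [Kc Kt]; have [m0 hm0] := Kt 1 ltr01.
have [c [c0 hc]] := @fin_bound (fun n c => bndX (block K n) c) m0
  (fun n c c' h h' => bndX_mono h h')
  (fun n _ => match Kc n with conj b _ => proj1 (boundedXE _) b end).
exists (m0%:R * c + 1); split; first by apply: addr_ge0 => //; apply: mulr_ge0.
move=> N v M1 M2.
apply: le_trans (@split_le (fun n => \sum_(0 <= i < M2) nsq (appY K N v n i)) m0 M1 _) _.
  by move=> n; apply: sumr_ge0 => *; exact: nsq_ge0.
have h1 : \sum_(0 <= n < m0) \sum_(0 <= i < M2) nsq (appY K N v n i) <= \sum_(0 <= n < m0) (c * vnorm2 N v).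
  by apply: ler_sum_nat => n /andP[_ nm]; exact: (hc n nm N v M2).
have h2 : \sum_(m0 <= n < M1) \sum_(0 <= i < M2) nsq (appY K N v n i) <= 1 * vnorm2 N v.
  by move/blocksumE: (hm0 m0 M1 N v (leqnn _)); apply.
rewrite sumr_const_nat subn0 in h1.
have -> : (m0%:R * c + 1) * vnorm2 N v = c * vnorm2 N v *+ m0 + 1 * vnorm2 N v.
  by rewrite -mulr_natr; ring.
exact: lerD.
Qed.

Lemma nat_bound i j n M M' m0 : (i < M)%N -> (j < M')%N -> (n < m0)%N ->
  (i.+1 ^ 2 + j.+1 ^ 2 + n.+1 < M ^ 2 + M' ^ 2 + m0 + 2)%N.
Proof.
move=> iM jM nm.
have h1 : (i.+1 ^ 2 <= M ^ 2)%N by rewrite leq_exp2r.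
have h2 : (j.+1 ^ 2 <= M' ^ 2)%N by rewrite leq_exp2r.
lia.
Qed.

Lemma back (K D : opY R) : ell2 (@compactX R) K -> ell2'0D D -> MYd (addY K D).
Proof.
move=> HK [[Dd [cD hD]] D0].
have [cK [cK0 hK]] := ell2_bounded HK.
have hDb : bndY D `|cD|.
  move=> N v M1 M2; apply: le_trans (_ : cD * vnorm2 N v <= _).
    by move/blocksumE: (hD M1 N v); apply.
  by apply: ler_wpM2r; [exact: vnorm2_ge0|exact: ler_norm].
split.
  by apply/boundedYE; exists (2 * cK + 2 * `|cD|); split; [|exact: bndY_add];
     apply: addr_ge0; apply: mulr_ge0.
move=> eps e0.
have e2 : 0 < eps ^+ 2 by apply: exprn_gt0.
have [m0 [M [M' hc]]] := approxK HK e2.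
set cut := cutK K m0 M M' in hc *.
have Ecut : cut = subY K (subY K cut).
  by apply: funext => n; apply: funext => i; apply: funext => j; rewrite /subY; ring.
have hcut : bndY cut (2 * cK + 2 * eps ^+ 2) by rewrite Ecut; exact: bndY_sub.
exists (addY cut D); split; [|split].
- apply/boundedYE; exists (2 * (2 * cK + 2 * eps ^+ 2) + 2 * `|cD|); split; last exact: bndY_add.
  by apply: addr_ge0; apply: mulr_ge0 => //; apply: addr_ge0; apply: mulr_ge0 => //; exact: ltW.
- exists ((M ^ 2 + M' ^ 2 + m0 + 2)%N%:R) => n i j hL.
  rewrite /addY.
  have -> : cut n i j = 0.
    rewrite /cut /cutK; case: ifP => // /and3P[nm iM jM].
    have := le_trans hL (dist_ub n i j); rewrite ler_nat.
    by have := nat_bound iM jM nm; lia.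
  rewrite add0r; case: (eqVneq i j) hL => [<-|ij] hL; last first.
    by have [_ h] := Dd n; apply: h; apply/eqP.
  case: (ltnP i n) => ni; first exact: D0.
  have h1 : (1 : R) < (M ^ 2 + M' ^ 2 + m0 + 2)%N%:R by rewrite ltr1n; lia.
  by move: hL; rewrite dist_diag // => hL; move: (lt_le_trans h1 hL); rewrite ltxx.
- apply/normY_leE; split; first exact: ltW.
  have -> : subY (addY K D) (addY cut D) = subY K cut.
    by apply: funext => n; apply: funext => i; apply: funext => j; rewrite /subY /addY; ring.
  exact: hc.
Qed.

Lemma fwd (T : opY R) : MYd T ->
  exists K D : opY R, ell2 (@compactX R) K /\ ell2'0D D /\ T = addY K D.
Proof.
move=> [/boundedYE [c0 [c00 hT]] Happ].
have approxT : forall dl, 0 < dl -> exists (S : opY R) (B : nat) cS, 0 <= cS /\ bndY S cS /\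
    bndY (subY T S) dl /\
    (forall n i j, subY S (dg S) n i j != 0 -> [&& (n < B)%N, (i < B)%N & (j < B)%N]).
  move=> dl dl0; have [h [h0 hh]] := small_h dl0.
  have [S [Sb [Sfp HS]]] := Happ h h0.
  have [B HB] := fp_support Sfp.
  have [cS [cS0 hS]] := proj1 (boundedYE S) Sb.
  exists S, B, cS; split => //; split => //; split.
    move/normY_leE: HS => [_ H]; apply: bndY_mono H _; have := sqr_ge0 h; lra.
  move=> n i j; rewrite /subY /dg; case: ifP => [_|hp]; first by rewrite subrr eqxx.
  by rewrite subr0 => nz; have := HB n i j nz; rewrite hp.
have EKF : forall S : opY R, subY (subY T (dg T)) (subY S (dg S)) = subY (subY T S) (dg (subY T S)).
  move=> S; apply: funext => n; apply: funext => i; apply: funext => j.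
  by rewrite /subY /dg; case: ifP => _; ring.
have hKb : bndY (subY T (dg T)) (2 * c0 + 2 * c0) by apply: bndY_sub => //; exact: bndY_dg.
exists (subY T (dg T)), (dg T); split; [split|split; [split; [split|]|]].
- move=> n; split.
    apply/boundedXE; exists (2 * c0 + 2 * c0); split; first lra.
    exact: bndY_block.
  move=> eps e0.
  have e2 : 0 < eps ^+ 2 / 16 by apply: divr_gt0 => //; exact: exprn_gt0.
  have [S [B [cS [cS0 [hS [hTS hF]]]]]] := approxT _ e2.
  set F := subY S (dg S) in hF *.
  have hKF : bndY (subY (subY T (dg T)) F) (2 * (eps ^+ 2 / 16) + 2 * (eps ^+ 2 / 16)).
    rewrite /F EKF; apply: bndY_sub => //; apply: bndY_dg => //; exact: ltW.
  have hFb : bndY F (2 * cS + 2 * cS) by apply: bndY_sub => //; exact: bndY_dg.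
  have K0 : 0 <= B%:R * 2 :> R by apply: mulr_ge0; [exact: ler0n|lra].
  have e4 : 0 < eps ^+ 2 / 4 by apply: divr_gt0 => //; exact: exprn_gt0.
  have [et [et0 het]] := small_mul K0 e4.
  have cF0 : 0 <= 2 * cS + 2 * cS by lra.
  have F0 : forall i j, (B <= i)%N -> block F n i j = 0.
    move=> i j Bi; apply/eqP; apply: contraT => nz.
    by have /and3P[_ iB _] := hF n i j nz; rewrite leqNgt iB in Bi.
  have [r [w Hw]] := net_op cF0 et0 (bndY_block n hFb) F0.
  exists r, w => N v v1; have [k [kr hk]] := Hw N v v1.
  exists k; split => //.
  apply/series_le => [i|M]; first exact: nsq_ge0.
  have h1 := bndY_block n hKF N v M.
  have h2 := hk M.
  apply: le_trans (_ : 2 * \sum_(0 <= i < M) nsq (appX (block (subY (subY T (dg T)) F) n) N v i) +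
                       2 * \sum_(0 <= i < M) nsq (appX (block F n) N v i - w k i) <= _).
    apply: sum2 => i.
    have -> : appX (block (subY T (dg T)) n) N v i - w k i =
      appX (block (subY (subY T (dg T)) F) n) N v i + (appX (block F n) N v i - w k i).
      have e : forall X : opY R, appX (block X n) N v i = appY X N v n i by [].
      by rewrite !e !appY_sub; ring.
    exact: nsqD.
  have h3 : 2 * (2 * (eps ^+ 2 / 16) + 2 * (eps ^+ 2 / 16)) * vnorm2 N v <= eps ^+ 2 / 2.
    have -> : 2 * (2 * (eps ^+ 2 / 16) + 2 * (eps ^+ 2 / 16)) = eps ^+ 2 / 2 by field.
    rewrite -[X in _ <= X]mulr1; apply: ler_wpM2l => //; apply: divr_ge0 => //; exact: sqr_ge0.
  have h4 : B%:R * et <= eps ^+ 2 / 8.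
    have -> : eps ^+ 2 / 8 = (eps ^+ 2 / 4) / 2 by field.
    rewrite ler_pdivlMr //; apply: le_trans het; rewrite mulrAC; by [].
  have h5 : eps ^+ 2 = eps ^+ 2 / 2 + 2 * (eps ^+ 2 / 8) + eps ^+ 2 / 4 by field.
  move: h1 h2 h3 h4 h5; set s1 := \sum_(0 <= i < M) _; set s2 := \sum_(0 <= i < M) _.
  set q := eps ^+ 2; set vn := vnorm2 N v; move=> h1 h2 h3 h4 h5.
  have h6 : 2 * s1 <= 2 * (2 * (q / 16) + 2 * (q / 16)) * vn.
    by rewrite -mulrA ler_wpM2l.
  have q0 : 0 <= q / 4 by apply: divr_ge0 => //; exact: sqr_ge0.
  lra.
- move=> eps e0.
  have e4 : 0 < eps / 4 by apply: divr_gt0.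
  have [S [B [cS [cS0 [hS [hTS hF]]]]]] := approxT _ e4.
  set F := subY S (dg S) in hF *.
  have hKF : bndY (subY (subY T (dg T)) F) (2 * (eps / 4) + 2 * (eps / 4)).
    rewrite /F EKF; apply: bndY_sub => //; apply: bndY_dg => //; exact: ltW.
  exists B => m m' N v Bm; apply/blocksumE => M2.
  have E : \sum_(m <= n < m') \sum_(0 <= i < M2) nsq (appY (subY T (dg T)) N v n i) =
           \sum_(m <= n < m') \sum_(0 <= i < M2) nsq (appY (subY (subY T (dg T)) F) N v n i).
    apply: eq_big_nat => n /andP[mn _]; apply: eq_bigr => i _.
    rewrite (appY_sub (subY T (dg T)) F) [appY F N v n i]big1 ?subr0 // => j _.
    have -> : F n i j = 0.
      apply/eqP; apply: contraT => nz.
      by have /and3P[nB _ _] := hF n i j nz; move: nB; rewrite ltnNge (leq_trans Bm mn).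
    by rewrite mul0r.
  rewrite E; apply: le_trans (_ : \sum_(0 <= n < m') \sum_(0 <= i < M2) nsq (appY (subY (subY T (dg T)) F) N v n i) <= _).
    by apply: sum_mono_low => // n; apply: sumr_ge0 => *; exact: nsq_ge0.
  apply: le_trans (hKF N v m' M2) _.
  have -> : 2 * (eps / 4) + 2 * (eps / 4) = eps by field.
  by [].
- move=> n; split.
    apply/boundedXE; exists c0; split => //; apply: bndY_block; exact: bndY_dg.
  by move=> i j ij; rewrite /block /dg; case: eqP.
- by exists c0 => m N v; apply/blocksumE => M; apply: (bndY_dg c00 hT).
- by move=> n i h; rewrite /dg eqxx leqNgt h.
- by apply: funext => n; apply: funext => i; apply: funext => j; rewrite /addY /subY; ring.
Qed.

End Basics.

Theorem mainTheorem11 (R : realType) (T : opY R) :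
  MYd T <->
  exists K D : opY R, ell2 (@compactX R) K /\ ell2'0D D /\ T = addY K D.
Proof.
split; first exact: fwd.
by move=> [K [D [HK [HD ->]]]]; exact: back.
Qed.
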